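(* Let $n\ge 1$, $\rho\in(0,1)$ and $a\in(0,1)$ with $2^n a\in\mathbb Z$. Then $\mathbf{MaxStab}_\Phi(a)\le \Gamma_\rho(a)$, where $$\Gamma_\rho(a):=\sup_{P_{Z|S}}\ \mathbb E[\Phi(a+\rho Z)]\quad\text{s.t.}\quad 0\le a+\rho Z\le 1\ \text{a.s.},\quad \mathbb E[Z]=0,\quad \mathbb E[Z^2]\le \mathbb E[SZ],$$ the supremum being over all conditional probability mass functions $P_{Z|S}$ (with $Z$ real-valued), where $(S,Z)\sim P_SP_{Z|S}$ and $S$ has distribution $P_S(-a)=1-a$, $P_S(1-a)=a$.
   Context: Let $n\ge1$, $\rho\in[0,1]$. Let $\mathbf X$ be uniformly distributed on $\{-1,1\}^n$ and let $\mathbf Y$ be obtained from $\mathbf X$ by independently flipping the sign of each coordinate with probability $(1-\rho)/2$. For a Boolean function $f:\{-1,1\}^n\to\{0,1\}$ define $T_\rho f(\mathbf x)=\mathbb E[f(\mathbf Y)\mid \mathbf X=\mathbf x]$. Let $\Phi:[0,1]\to\mathbb R$ be continuous and strictly convex. The $\Phi$-stability is $\mathbf{Stab}_\Phi[f]=\mathbb E[\Phi(T_\rho f(\mathbf X))]$, and for $a\in 2^{-n}\{0,1,\dots,2^n\}$, $\mathbf{MaxStab}_\Phi(a)=\max\{\mathbf{Stab}_\Phi[f]: f:\{-1,1\}^n\to\{0,1\},\ \mathbb E f(\mathbf X)=a\}$. *)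

(* Defs.v *)
From HB Require Import structures.
From mathcomp Require Import all_boot all_order all_algebra.
From mathcomp Require Import all_classical all_reals all_analysis.
Set Implicit Arguments. Unset Strict Implicit. Unset Printing Implicit Defensive.
Import Order.TTheory GRing.Theory Num.Theory.
Import numFieldNormedType.Exports.
Local Open Scope classical_set_scope.
Local Open Scope ring_scope.

(* The cube {-1,1}^n is encoded as {ffun 'I_n -> bool}; the boolean value
   only encodes the sign of each coordinate (true <-> -1). *)
Definition cube (n : nat) := {ffun 'I_n -> bool}.

Section defs.
Variable R : realType.

(* P(Y = y | X = x): each coordinate flipped independently w.p. (1-rho)/2 *)
Definition noise_kernel (n : nat) (rho : R) (x y : cube n) : R :=
  \prod_(i < n) (if x i == y i then (1 + rho) / 2 else (1 - rho) / 2).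

Definition T_rho (n : nat) (rho : R) (f : cube n -> bool) (x : cube n) : R :=
  \sum_(y : cube n) noise_kernel rho x y * (f y)%:R.

Definition mean (n : nat) (f : cube n -> bool) : R :=
  (2 ^+ n)^-1 * \sum_(x : cube n) (f x)%:R.

Definition Stab (n : nat) (rho : R) (Phi : R -> R) (f : cube n -> bool) : R :=
  (2 ^+ n)^-1 * \sum_(x : cube n) Phi (T_rho rho f x).

(* MaxStab_Phi(a) = max { Stab_Phi[f] : E f = a } (a finite set) *)
Definition MaxStab (n : nat) (rho : R) (Phi : R -> R) (a : R) : R :=
  sup [set Stab rho Phi (f : cube n -> bool) | f in [set f : {ffun cube n -> bool} | mean f = a]].

Definition strictly_convex01 (Phi : R -> R) : Prop :=
  forall x y t : R, 0 <= x <= 1 -> 0 <= y <= 1 -> x != y -> 0 < t < 1 ->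
    Phi (t * x + (1 - t) * y) < t * Phi x + (1 - t) * Phi y.

(* Expectation against a discrete (countably supported) distribution given by
   atoms z k with weights w k:  sum_k w k * g (z k). *)
Definition dexp (w z : nat -> R) (g : R -> R) : R :=
  limn (series ((fun k => w k * g (z k)) : R^nat)).

Definition is_pmf (w : nat -> R) : Prop :=
  (forall k, 0 <= w k) /\ series (w : R^nat) @ \oo --> (1 : R).

(* Feasibility of a conditional pmf P_{Z|S}, where S = -a w.p. 1-a and
   S = 1-a w.p. a; P_{Z|S=-a} = (w0,z0), P_{Z|S=1-a} = (w1,z1). *)
Definition Gamma_feasible (rho a : R) (w0 z0 w1 z1 : nat -> R) : Prop :=
  [/\ is_pmf w0 /\ is_pmf w1,
      (forall k, 0 < w0 k -> 0 <= a + rho * z0 k <= 1),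
      (forall k, 0 < w1 k -> 0 <= a + rho * z1 k <= 1),
      (1 - a) * dexp w0 z0 id + a * dexp w1 z1 id = 0 &
      (* E[Z^2] <= E[S Z] *)
      (1 - a) * dexp w0 z0 (fun z => z ^+ 2) + a * dexp w1 z1 (fun z => z ^+ 2)
        <= (1 - a) * dexp w0 z0 (fun z => - a * z)
           + a * dexp w1 z1 (fun z => (1 - a) * z)].

Definition Gamma_obj (Phi : R -> R) (rho a : R) (w0 z0 w1 z1 : nat -> R) : R :=
  (1 - a) * dexp w0 z0 (fun z => Phi (a + rho * z))
  + a * dexp w1 z1 (fun z => Phi (a + rho * z)).

Definition Gamma (Phi : R -> R) (rho a : R) : \bar R :=
  ereal_sup [set (Gamma_obj Phi rho a p.1.1 p.1.2 p.2.1 p.2.2)%:E |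
             p in [set p : ((nat -> R) * (nat -> R)) * ((nat -> R) * (nat -> R)) |
               Gamma_feasible rho a p.1.1 p.1.2 p.2.1 p.2.2]].
End defs.

(* Main.v *)
Require Import Defs.
From HB Require Import structures.
From mathcomp Require Import all_boot all_order all_algebra.
From mathcomp Require Import all_classical all_reals all_analysis.
From mathcomp Require Import ring lra.
Import Order.TTheory GRing.Theory Num.Theory.
Import numFieldNormedType.Exports.
Local Open Scope classical_set_scope.
Local Open Scope ring_scope.
Set Implicit Arguments. Unset Strict Implicit.
Section K.
Variable R : realType.
Variable n : nat.

Definition sgn (b : bool) : R := if b then -1 else 1.
Definition chi (A x : cube n) : R := \prod_(i < n) (if A i then sgn (x i) else 1).
Definition wt (A : cube n) (t : R) : R := \prod_(i < n) (if A i then t else 1).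

Lemma prod_sum (F : 'I_n -> bool -> R) :
  \sum_(x : cube n) \prod_(i < n) F i (x i) = \prod_(i < n) (F i true + F i false).
Proof.
symmetry; rewrite (eq_bigr (fun i => \sum_(j : bool) F i j)); last first.
  by move=> i _; rewrite big_bool.
by rewrite bigA_distr_bigA.
Qed.

Lemma kern1 (t : R) (b c : bool) :
  (if b == c then (1 + t) / 2 else (1 - t) / 2) = 2^-1 * (1 + t * sgn b * sgn c).
Proof. by case: b; case: c => /=; rewrite /sgn; field. Qed.

Lemma kern_spec (t : R) (x y : cube n) :
  noise_kernel t x y = (2 ^+ n)^-1 * \sum_(A : cube n) wt A t * chi A x * chi A y.
Proof.
rewrite /noise_kernel (eq_bigr (fun i => 2^-1 * (1 + t * sgn (x i) * sgn (y i)))); last first.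
  by move=> i _; rewrite kern1.
rewrite big_split /= prodr_const card_ord exprVn; congr (_ * _).
rewrite (eq_bigr (fun i => \sum_(b : bool) (if b then t * sgn (x i) * sgn (y i) else 1))); last first.
  by move=> i _; rewrite big_bool /= addrC.
rewrite bigA_distr_bigA; apply: eq_bigr => A _.
rewrite /wt /chi -!big_split /=; apply: eq_bigr => i _.
by case: (A i); rewrite ?mulr1.
Qed.

Lemma kern_sq (t : R) (y z : cube n) :
  \sum_(x : cube n) noise_kernel t x y * noise_kernel t x z = noise_kernel (t ^+ 2) y z.
Proof.
rewrite /noise_kernel.
rewrite (eq_bigr (fun x : cube n => \prod_(i < n) ((if x i == y i then (1 + t) / 2 else (1 - t) / 2)
   * (if x i == z i then (1 + t) / 2 else (1 - t) / 2)))); last first.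
  by move=> x _; rewrite big_split.
rewrite (prod_sum (fun i b => (if b == y i then (1 + t) / 2 else (1 - t) / 2)
   * (if b == z i then (1 + t) / 2 else (1 - t) / 2))).
apply: eq_bigr => i _.
by case: (y i); case: (z i) => /=; field.
Qed.

Lemma kern_sym (t : R) (x y : cube n) : noise_kernel t x y = noise_kernel t y x.
Proof. by apply: eq_bigr => i _; rewrite eq_sym. Qed.

Lemma kern_col (t : R) (y : cube n) : \sum_(x : cube n) noise_kernel t x y = 1.
Proof.
rewrite /noise_kernel (prod_sum (fun i b => if b == y i then (1 + t) / 2 else (1 - t) / 2)).
rewrite big1 // => i _.
by case: (y i) => /=; field.
Qed.

Lemma kern_row (t : R) (x : cube n) : \sum_(y : cube n) noise_kernel t x y = 1.
Proof.
rewrite -(kern_col t x); apply: eq_bigr => y _; exact: kern_sym.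
Qed.

Lemma kern_ge0 (t : R) (x y : cube n) : 0 <= t <= 1 -> 0 <= noise_kernel t x y.
Proof.
move=> /andP[t0 t1]; apply: prodr_ge0 => i _.
case: (_ == _); apply: divr_ge0; lra.
Qed.

Lemma kern0 (x y : cube n) : noise_kernel (0 : R) x y = (2 ^+ n)^-1.
Proof.
rewrite /noise_kernel (eq_bigr (fun=> 2^-1)); last first.
  by move=> i _; case: (_ == _); rewrite ?addr0 ?subr0 mul1r.
by rewrite prodr_const card_ord exprVn.
Qed.

End K.
Arguments sgn {R}.
Arguments chi {R n}.
Arguments wt {R n}.
Section Q.
Variable R : realType.
Variable n : nat.

Definition Qf (F : cube n -> R) (t : R) : R :=
  \sum_(x : cube n) \sum_(y : cube n) F x * noise_kernel t x y * F y.

Lemma Q_spec F t : Qf F t =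
  (2 ^+ n)^-1 * \sum_(A : cube n) wt A t * (\sum_(x : cube n) F x * chi A x) ^+ 2.
Proof.
rewrite /Qf.
transitivity (\sum_(x : cube n) \sum_(y : cube n) \sum_(A : cube n)
   (2 ^+ n)^-1 * (wt A t * ((F x * chi A x) * (F y * chi A y)))).
  apply: eq_bigr => x _; apply: eq_bigr => y _.
  rewrite kern_spec !mulr_sumr mulr_suml; apply: eq_bigr => A _; ring.
rewrite (eq_bigr (fun x => \sum_(A : cube n) \sum_(y : cube n)
   (2 ^+ n)^-1 * (wt A t * ((F x * chi A x) * (F y * chi A y))))); last first.
  by move=> x _; rewrite exchange_big.
rewrite exchange_big /= mulr_sumr; apply: eq_bigr => A _.
rewrite expr2 mulr_suml !mulr_sumr; apply: eq_bigr => x _.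
rewrite !mulr_sumr; apply: eq_bigr => y _; ring.
Qed.

Lemma wt_ineq (A : cube n) (r : R) : 0 < r < 1 ->
  0 <= r * wt A r - wt A (r ^+ 2) + (1 - r) * wt A 0.
Proof.
move=> /andP[r0 r1].
case: (pickP (fun i => A i)) => [i0 Ai0 | none].
- have w0 : wt A 0 = 0 :> R by rewrite /wt (bigD1 i0) //= Ai0 mul0r.
  have w2 : wt A (r ^+ 2) = wt A r ^+ 2.
    rewrite /wt -prodrXl; apply: eq_bigr => i _; case: (A i) => //; by rewrite expr1n.
  have wge : 0 <= wt A r by apply: prodr_ge0 => i _; case: (A i) => //; lra.
  have wle : wt A r <= r.
    rewrite /wt (bigD1 i0) //= Ai0.
    have h1 : \prod_(i < n | i != i0) (if A i then r else 1) <= 1.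
      apply: prodr_ile1 => i _; case: (A i) => //; apply/andP; split; lra.
    have h0 : 0 <= \prod_(i < n | i != i0) (if A i then r else 1).
      by apply: prodr_ge0 => i _; case: (A i) => //; lra.
    nra.
  rewrite w0 w2; nra.
- have w1 : forall t : R, wt A t = 1.
    by move=> t; rewrite /wt big1 // => i _; rewrite none.
  rewrite !w1; lra.
Qed.

Lemma Q_ineq F (r : R) : 0 < r < 1 ->
  Qf F (r ^+ 2) - Qf F 0 <= r * (Qf F r - Qf F 0).
Proof.
move=> hr.
set c := ((2:R) ^+ n)^-1.
have c0 : 0 < c by rewrite /c invr_gt0 exprn_gt0.
rewrite !Q_spec -/c.
set S1 := \sum_(A : cube n) wt A r * _.
set S2 := \sum_(A : cube n) wt A (r ^+ 2) * _.
set S0 := \sum_(A : cube n) wt A 0 * _.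
have E : \sum_(A : cube n) (r * wt A r - wt A (r ^+ 2) + (1 - r) * wt A 0)
     * (\sum_(x : cube n) F x * chi A x) ^+ 2 = r * S1 - S2 + (1 - r) * S0.
  rewrite /S1 /S2 /S0 !mulr_sumr -sumrB -big_split /=.
  by apply: eq_bigr => A _; ring.
have : 0 <= r * S1 - S2 + (1 - r) * S0.
  rewrite -E; apply: sumr_ge0 => A _; apply: mulr_ge0; [exact: wt_ineq | exact: sqr_ge0].
move=> H.
have : 0 <= c * (r * S1 - S2 + (1 - r) * S0) by apply: mulr_ge0 => //; lra.
move=> H2.
have -> : c * S2 - c * S0 = r * (c * S1 - c * S0) - c * (r * S1 - S2 + (1 - r) * S0) by ring.
lra.
Qed.
End Q.
Section S.
Variable R : realType.

Lemma series_fin (u : nat -> R) N : (forall k, (N <= k)%N -> u k = 0) ->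
  series u @ \oo --> \sum_(0 <= k < N) u k.
Proof.
move=> hu; apply: cvg_near_cst; near=> m.
have hm : (N <= m)%N by near: m; exists N.
rewrite /series /= (big_cat_nat (leq0n N) hm) /=.
rewrite [X in _ + X]big_nat_cond [X in _ + X]big1 ?addr0 // => k /andP[/andP[hk _] _].
exact: hu.
Unshelve. all: end_near.
Qed.

Lemma dexp_fin (w z : nat -> R) g N : (forall k, (N <= k)%N -> w k = 0) ->
  dexp w z g = \sum_(0 <= k < N) w k * g (z k).
Proof.
move=> hw; rewrite /dexp; apply: cvg_lim => //.
by apply: series_fin => k hk; rewrite hw // mul0r.
Qed.

Variable n : nat.
Let s := index_enum (cube n).
Let N := size s.
Definition x0c : cube n := [ffun=> false].
Let e k := nth x0c s k.

Lemma sum_enum (G : cube n -> R) :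
  \sum_(0 <= k < N) G (e k) = \sum_(x : cube n) G x.
Proof. by rewrite [RHS](big_nth x0c). Qed.

Definition lift_w (W : cube n -> R) (k : nat) : R := if (k < N)%N then W (e k) else 0.
Definition lift_z (Z : cube n -> R) (k : nat) : R := Z (e k).

Lemma lift_w0 W k : (N <= k)%N -> lift_w W k = 0.
Proof. by rewrite /lift_w leqNgt => /negbTE ->. Qed.

Lemma dexp_lift W Z g :
  dexp (lift_w W) (lift_z Z) g = \sum_(x : cube n) W x * g (Z x).
Proof.
rewrite (dexp_fin _ _ (@lift_w0 W)) -sum_enum.
by apply: eq_big_nat => k /andP[_ hk]; rewrite /lift_w hk.
Qed.

Lemma series_lift W : series (lift_w W : R^nat) @ \oo --> \sum_(x : cube n) W x.
Proof.
have -> : \sum_(x : cube n) W x = \sum_(0 <= k < N) lift_w W k.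
  rewrite -sum_enum; apply: eq_big_nat => k /andP[_ hk]; by rewrite /lift_w hk.
exact: series_fin (@lift_w0 W).
Qed.

End S.
Section F.
Variable R : realType.
Variable n : nat.

Lemma feas (Phi : R -> R) (rho a : R) (f : cube n -> bool) :
  0 < rho < 1 -> 0 < a < 1 -> mean R f = a ->
  exists p : ((nat -> R) * (nat -> R)) * ((nat -> R) * (nat -> R)),
   Gamma_feasible rho a p.1.1 p.1.2 p.2.1 p.2.2 /\
   Gamma_obj Phi rho a p.1.1 p.1.2 p.2.1 p.2.2 = Stab rho Phi f.
Proof.
move=> hr /andP[a0 a1] ha.
have r0 : 0 < rho by case/andP: hr.
have r1 : rho < 1 by case/andP: hr.
have rne : rho != 0 by rewrite gt_eqF.
have ane : a != 0 by rewrite gt_eqF.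
have ane1 : 1 - a != 0 by rewrite gt_eqF // subr_gt0.
set F := fun x : cube n => (f x)%:R : R.
set Tf := T_rho rho f.
set c := ((2:R) ^+ n)^-1.
have tn0 : (0:R) < 2 ^+ n by rewrite exprn_gt0.
have c0 : 0 < c by rewrite /c invr_gt0.
have t2ne : (2:R) ^+ n != 0 by rewrite gt_eqF.
pose zz x := (Tf x - a) / rho.
pose W0 x := if f x then 0 else c / (1 - a).
pose W1 x := if f x then c / a else 0.
pose w0 := lift_w W0; pose w1 := lift_w W1; pose z := lift_z zz.
have mix : forall g0 g1 : R -> R, (1 - a) * dexp w0 z g0 + a * dexp w1 z g1 =
    c * \sum_(x : cube n) (if f x then g1 (zz x) else g0 (zz x)).
  move=> g0 g1; rewrite !dexp_lift !mulr_sumr -big_split /=.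
  apply: eq_bigr => x _; rewrite /W0 /W1; case: (f x) => /=; field; by [].
have hcard : \sum_(x : cube n) (1:R) = 2 ^+ n.
  by rewrite sumr_const card_ffun card_bool card_ord natrX.
have hconst : forall k : R, \sum_(x : cube n) k = 2 ^+ n * k.
  by move=> k; rewrite -hcard mulr_suml; apply: eq_bigr => x _; rewrite mul1r.
have hF : \sum_(x : cube n) F x = 2 ^+ n * a.
  by rewrite -ha /mean mulrA divff ?mul1r // gt_eqF.
have hT01 : forall x, 0 <= Tf x <= 1.
  move=> x; apply/andP; split.
    apply: sumr_ge0 => y _; apply: mulr_ge0; first by apply: kern_ge0; apply/andP; split; lra.
    by case: (f y).
  rewrite -(kern_row rho x); apply: ler_sum => y _.
  have := kern_ge0 x y (_ : 0 <= rho <= 1); case: (f y) => /=; rewrite ?mulr1 ?mulr0 //.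
  by move=> h; apply: h; apply/andP; split; lra.
have hsumT : \sum_(x : cube n) Tf x = \sum_(x : cube n) F x.
  rewrite /Tf /T_rho exchange_big /=; apply: eq_bigr => y _.
  by rewrite -mulr_suml kern_col mul1r.
have hz : forall x, a + rho * zz x = Tf x by move=> x; rewrite /zz; field.
exists ((w0, z), (w1, z)); split => /=.
  split.
  - split; split.
    + move=> k; rewrite /w0 /lift_w; case: ifP => // _; rewrite /W0; case: (f _) => //.
      by apply: divr_ge0; lra.
    + have -> : (1:R) = \sum_(x : cube n) W0 x.
        rewrite (eq_bigr (fun x => c / (1 - a) * (1 - F x))); last first.
          by move=> x _; rewrite /W0 /F; case: (f x) => /=; rewrite ?subrr ?mulr0 ?subr0 ?mulr1.
        rewrite -mulr_sumr sumrB hcard hF /c; field; by rewrite ?ane ?ane1 ?t2ne.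
      exact: (@series_lift R n).
    + move=> k; rewrite /w1 /lift_w; case: ifP => // _; rewrite /W1; case: (f _) => //.
      by apply: divr_ge0; lra.
    + have -> : (1:R) = \sum_(x : cube n) W1 x.
        rewrite (eq_bigr (fun x => c / a * F x)); last first.
          by move=> x _; rewrite /W1 /F; case: (f x) => /=; rewrite ?mulr0 ?mulr1.
        rewrite -mulr_sumr hF /c; field; by rewrite ?ane ?ane1 ?t2ne.
      exact: (@series_lift R n).
  - by move=> k _; rewrite /z /lift_z hz.
  - by move=> k _; rewrite /z /lift_z hz.
  - rewrite mix (eq_bigr (fun x => rho^-1 * (Tf x - a))); last first.
      by move=> x _; case: (f x); rewrite /zz mulrC.
    by rewrite -mulr_sumr sumrB hsumT hF hconst subrr !mulr0.
  - rewrite !mix.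
    have hQ1 : \sum_(x : cube n) F x * Tf x = Qf F rho.
      rewrite /Qf; apply: eq_bigr => x _; rewrite /Tf /T_rho mulr_sumr.
      by apply: eq_bigr => y _; rewrite mulrA.
    have hQ2 : \sum_(x : cube n) Tf x ^+ 2 = Qf F (rho ^+ 2).
      rewrite /Qf /Tf /T_rho /F.
      transitivity (\sum_(x : cube n) \sum_(y : cube n) \sum_(v : cube n)
        (noise_kernel rho x y * noise_kernel rho x v) * ((f y)%:R * (f v)%:R)).
        apply: eq_bigr => x _; rewrite expr2 mulr_suml; apply: eq_bigr => y _.
        by rewrite mulr_sumr; apply: eq_bigr => v _; ring.
      rewrite exchange_big /=; apply: eq_bigr => y _.
      rewrite exchange_big /=; apply: eq_bigr => v _.
      by rewrite -mulr_suml kern_sq; ring.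
    have hQ0 : Qf F 0 = 2 ^+ n * a ^+ 2.
      have -> : Qf F 0 = c * ((\sum_(x : cube n) F x) * (\sum_(y : cube n) F y)).
        rewrite /Qf big_distrlr mulr_sumr; apply: eq_bigr => x _; rewrite mulr_sumr.
        by apply: eq_bigr => y _; rewrite kern0 -/c mulrAC mulrC.
      by rewrite hF /c; field.
    have L : \sum_(x : cube n) (if f x then zz x ^+ 2 else zz x ^+ 2) =
        rho^-1 ^+ 2 * (Qf F (rho ^+ 2) - 2 ^+ n * a ^+ 2).
      transitivity (rho^-1 ^+ 2 * \sum_(x : cube n) (Tf x ^+ 2 + (-2 * a) * Tf x + a ^+ 2)).
        by rewrite mulr_sumr; apply: eq_bigr => x _; case: (f x); rewrite /zz; field.
      rewrite !big_split /= -mulr_sumr hconst hsumT hF hQ2; congr (_ * _); ring.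
    have Rr : \sum_(x : cube n) (if f x then (1 - a) * zz x else - a * zz x) =
        rho^-1 * (Qf F rho - 2 ^+ n * a ^+ 2).
      transitivity (rho^-1 * \sum_(x : cube n) (F x * Tf x + (- a) * F x + (- a) * Tf x + a ^+ 2)).
        by rewrite mulr_sumr; apply: eq_bigr => x _; rewrite /F; case: (f x); rewrite /zz /= ?mulr1n ?mulr0n; field.
      rewrite !big_split /= -!mulr_sumr hconst hsumT hF hQ1; congr (_ * _); ring.
    rewrite L Rr; apply: ler_wpM2l; first exact: ltW.
    rewrite -hQ0.
    have H := Q_ineq F hr.
    have H2 : rho^-1 ^+ 2 * (Qf F (rho ^+ 2) - Qf F 0) <= rho^-1 ^+ 2 * (rho * (Qf F rho - Qf F 0)).
      by apply: ler_wpM2l => //; apply: exprn_ge0; rewrite invr_ge0 ltW.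
    have e : rho^-1 ^+ 2 * (rho * (Qf F rho - Qf F 0)) = rho^-1 * (Qf F rho - Qf F 0) by field.
    by rewrite -e.
rewrite /Gamma_obj mix /Stab; congr (_ * _); apply: eq_bigr => x _.
by case: (f x); rewrite hz.
Qed.
End F.
Section M.
Variable R : realType.
Variable n : nat.

Lemma exists_mean (a : R) : 0 < a < 1 -> (exists k : nat, a = k%:R / 2 ^+ n) ->
  exists f : {ffun cube n -> bool}, mean R f = a.
Proof.
move=> /andP[a0 a1] [k ak].
set s := index_enum (cube n).
set N := size s.
have tn0 : (0:R) < 2 ^+ n by rewrite exprn_gt0.
have hN : (N%:R : R) = 2 ^+ n.
  have := sum_enum (R:=R) (n:=n) (fun=> 1).
  rewrite sumr_const_nat subn0 sumr_const card_ffun card_bool card_ord natrX => ->.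
  by [].
have hk : (k <= N)%N.
  rewrite -(ler_nat R) hN; apply: ltW.
  by rewrite ak ltr_pdivrMr // mul1r in a1.
exists [ffun x => (index x s < k)%N].
rewrite /mean ak mulrC; congr (_ * _).
rewrite -(sum_enum (R:=R) (n:=n)) -/s -/N.
rewrite (eq_big_nat _ _ (F2 := fun i => ((i < k)%N)%:R)); last first.
  move=> i /andP[_ hi]; rewrite ffunE index_uniq //; exact: index_enum_uniq.
rewrite (big_cat_nat (leq0n k) hk) /=.
rewrite [X in _ + X]big_nat_cond [X in _ + X]big1 ?addr0; last first.
  by move=> i /andP[/andP[hi _] _]; rewrite ltnNge hi.
rewrite big_nat_cond (eq_bigr (fun=> 1)); last first.
  by move=> i /andP[/andP[_ ->] _].
by rewrite -big_nat_cond sumr_const_nat subn0.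
Qed.
End M.

Theorem theorem2p1 (R : realType) (Phi : R -> R) (n : nat) (rho a : R) :
  {within `[0, 1], continuous Phi} ->
  strictly_convex01 Phi ->
  (1 <= n)%N ->
  0 < rho < 1 ->
  0 < a < 1 ->
  (exists k : nat, a = k%:R / 2 ^+ n) ->
  ((MaxStab n rho Phi a)%:E <= Gamma Phi rho a)%E.
Proof.
move=> _ _ _ hr ha hk.
set E := [set Stab rho Phi (f : cube n -> bool) | f in [set f : {ffun cube n -> bool} | mean R f = a]].
have ne : E !=set0.
  have [f hf] := exists_mean ha hk.
  by exists (Stab rho Phi f); exists f.
have ub : forall r, E r -> (r%:E <= Gamma Phi rho a)%E.
  move=> r [f hf <-].
  have [p [hp hobj]] := feas Phi hr ha hf.
  apply: ereal_sup_ubound; exists p => //.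
  by rewrite hobj.
rewrite /MaxStab -/E.
case eqG: (Gamma Phi rho a) => [g||].
- rewrite lee_fin; apply: ge_sup => // r Er.
  by have := ub r Er; rewrite eqG lee_fin.
- exact: leey.
- case: ne => r Er.
  by have := ub r Er; rewrite eqG leeNy_eq.
Qed.
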